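(* Let $M$ be a finite monoid and $k$ a field. If there exists an idempotent $e\in M$ such that the monoid $eMe$ has two irreducible elements that are not associates (in $eMe$), then the monoid algebra $kM$ is of infinite representation type.
   Context: For an idempotent $e\in M$, $eMe=\{eme: m\in M\}$ is a monoid with identity $e$ under the multiplication of $M$. A non-unit $p$ in a monoid $N$ is irreducible if whenever $p=ab$ with $a,b\in N$, then $a$ or $b$ is a unit of $N$. Two elements $a,b\in N$ are associates if there exist units $u,v\in N$ with $a=ubv$. A finite-dimensional $k$-algebra is of infinite representation type if it has infinitely many isomorphism classes of finite-dimensional indecomposable modules. *)

(* Defs.v *)
From HB Require Import structures.
From mathcomp Require Import all_boot all_order all_algebra.
Set Implicit Arguments. Unset Strict Implicit. Unset Printing Implicit Defensive.
Import GRing.Theory.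
Local Open Scope ring_scope.

Definition is_monoid (M : Type) (mul : M -> M -> M) (one : M) : Prop :=
  (forall a b c, mul a (mul b c) = mul (mul a b) c) /\
  (forall a, mul one a = a) /\ (forall a, mul a one = a).

Section Corner.
Variables (M : Type) (mul : M -> M -> M) (e : M).

Definition idempotent_el : Prop := mul e e = e.

Definition in_corner (x : M) : Prop := exists m, x = mul (mul e m) e.

Definition corner_unit (u : M) : Prop :=
  in_corner u /\ exists v, in_corner v /\ mul u v = e /\ mul v u = e.

Definition corner_irreducible (p : M) : Prop :=
  in_corner p /\ ~ corner_unit p /\
  forall a b, in_corner a -> in_corner b -> p = mul a b ->
    corner_unit a \/ corner_unit b.

Definition corner_associates (a b : M) : Prop :=
  exists u v, corner_unit u /\ corner_unit v /\ a = mul (mul u b) v.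
End Corner.

(* Finite-dimensional (left) kM-modules are represented as matrix
   representations of the monoid M: a unital monoid homomorphism
   M -> 'M[k]_n (acting on column vectors k^n). *)
Section Reps.
Variables (k : fieldType) (M : Type) (mul : M -> M -> M) (one : M).

Definition is_rep (n : nat) (rho : M -> 'M[k]_n) : Prop :=
  rho one = 1%:M /\ forall a b, rho (mul a b) = rho a *m rho b.

Definition rep_iso (n m : nat) (rho : M -> 'M[k]_n) (sigma : M -> 'M[k]_m)
  : Prop :=
  exists (P : 'M[k]_(n, m)) (Q : 'M[k]_(m, n)),
    P *m Q = 1%:M /\ Q *m P = 1%:M /\ forall x, rho x *m P = P *m sigma x.

Definition rep_dsum (a b : nat) (r1 : M -> 'M[k]_a) (r2 : M -> 'M[k]_b)
  : M -> 'M[k]_(a + b) :=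
  fun x => block_mx (r1 x) 0 0 (r2 x).

Definition rep_indecomposable (n : nat) (rho : M -> 'M[k]_n) : Prop :=
  (0 < n)%N /\
  forall (a b : nat) (r1 : M -> 'M[k]_a) (r2 : M -> 'M[k]_b),
    is_rep r1 -> is_rep r2 -> (0 < a)%N -> (0 < b)%N ->
    ~ rep_iso rho (rep_dsum r1 r2).

(* infinite representation type: infinitely many isomorphism classes of
   finite-dimensional indecomposable modules, i.e. for every N there are
   N pairwise non-isomorphic f.d. indecomposable modules. *)
Definition infinite_rep_type : Prop :=
  forall N : nat, exists (dim : 'I_N -> nat)
    (rho : forall i : 'I_N, M -> 'M[k]_(dim i)),
    (forall i, is_rep (rho i) /\ rep_indecomposable (rho i)) /\
    (forall i j, i != j -> ~ rep_iso (rho i) (rho j)).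
End Reps.

(* Main.v *)
Require Import Defs.
From mathcomp Require Import all_boot all_order all_algebra.
From mathcomp Require Import zify.
From Stdlib Require Import ClassicalEpsilon.
Set Implicit Arguments. Unset Strict Implicit. Unset Printing Implicit Defensive.
Import GRing.Theory.
Local Open Scope ring_scope.


Section Coind.
Variables (k : fieldType) (M : finType) (mul : M -> M -> M) (one e : M).
Hypothesis massoc : forall a b c, mul a (mul b c) = mul (mul a b) c.
Hypothesis mul1m : forall a, mul one a = a.
Hypothesis he : mul e e = e.
Variable d : nat.
Variable rV : M -> 'M[k]_d.
Local Notation ne x := (mul (mul e x) e).
Hypothesis H1 : forall x y, rV (mul (ne x) (ne y)) = rV (ne x) *m rV (ne y).
Hypothesis H2 : rV e = 1%:M.

Lemma heR a : mul (mul a e) e = mul a e.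
Proof. by rewrite -massoc he. Qed.

Local Notation D := (#|M| * d)%N.

Definition ri (y : M) (j : 'I_d) : 'I_(#|M| * d) := mxvec_index (enum_rank y) j.

Lemma ri_inj y j z l : (ri y j == ri z l) = (y == z) && (j == l).
Proof.
rewrite /ri /mxvec_index (inj_eq (@cast_ord_inj _ _ _)) (inj_eq (@enum_rank_inj _)).
by rewrite xpair_eqE (inj_eq (@enum_rank_inj _)).
Qed.

Definition Ev y : 'M[k]_(D, d) := \matrix_(a, j) (a == ri y j)%:R.

Lemma mulEv m (A : 'M[k]_(m, D)) y : A *m Ev y = \matrix_(i, j) A i (ri y j).
Proof.
apply/matrixP => i j; rewrite !mxE (bigD1 (ri y j)) //= mxE eqxx mulr1 big1 ?addr0 //.
by move=> a /negbTE; rewrite mxE => ->; rewrite mulr0.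
Qed.

Lemma sepEv m (A B : 'M[k]_(m, D)) : (forall y, A *m Ev y = B *m Ev y) -> A = B.
Proof.
move=> H; apply/matrixP => i a; case/mxvec_indexP: a => i0 j0.
have := H (enum_val i0); move/matrixP/(_ i j0).
by rewrite !mulEv !mxE /ri enum_valK.
Qed.

Definition Emb y : 'M[k]_(d, D) := (Ev y)^T.

Lemma EmbEv y z : Emb y *m Ev z = (y == z)%:R%:M.
Proof.
apply/matrixP => i j; rewrite mulEv !mxE ri_inj eq_sym [j == i]eq_sym.
by case: (y == z); case: (i == j); rewrite /= ?mulr1n ?mulr0n.
Qed.

Definition F m : 'M[k]_D := \sum_z Ev (mul m z) *m Emb z.

Lemma FEv m y : F m *m Ev y = Ev (mul m y).
Proof.
rewrite /F mulmx_suml (bigD1 y) //= -mulmxA EmbEv eqxx mulmx1 big1 ?addr0 //.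
by move=> z /negbTE zy; rewrite -mulmxA EmbEv zy /= -scalemx1 scale0r mulmx0.
Qed.

Lemma F1 : F one = 1%:M.
Proof. by apply: sepEv => y; rewrite FEv mul1m mul1mx. Qed.

Lemma FM a b : F (mul a b) = F a *m F b.
Proof. by apply: sepEv => y; rewrite -mulmxA !FEv massoc. Qed.

Definition Cm (yx : M * M) : 'M[k]_(D, d) :=
  Ev (mul yx.1 (ne yx.2)) - Ev yx.1 *m rV (ne yx.2).

Definition U := (\bigcap_(yx : M * M) kermx (Cm yx))%MS.

Lemma subUP m (A : 'M[k]_(m, D)) : (A <= U)%MS ->
  forall y x, A *m Ev (mul y (ne x)) = A *m Ev y *m rV (ne x).
Proof.
move/sub_bigcapmxP => H y x; have := H (y, x) isT.
by rewrite sub_kermx /Cm /= mulmxBr mulmxA subr_eq0 => /eqP.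
Qed.

Lemma subUI m (A : 'M[k]_(m, D)) :
  (forall y x, A *m Ev (mul y (ne x)) = A *m Ev y *m rV (ne x)) -> (A <= U)%MS.
Proof.
move=> H; apply/sub_bigcapmxP => [[y x]] _.
by rewrite sub_kermx /Cm /= mulmxBr mulmxA H subrr.
Qed.

Lemma U_inv m (A : 'M[k]_(m, D)) a : (A <= U)%MS -> (A *m F a <= U)%MS.
Proof.
move=> HA; have H := subUP HA; apply: subUI => y x.
have E1 z : A *m F a *m Ev z = A *m Ev (mul a z) by rewrite -mulmxA FEv.
by rewrite !E1 massoc H.
Qed.

Lemma neM x y : mul (ne x) (ne y) = ne (mul x (ne y)).
Proof. by rewrite !massoc !heR. Qed.

Definition G : 'M[k]_(d, D) := \sum_y rV (ne y) *m Emb y.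

Lemma GEv z : G *m Ev z = rV (ne z).
Proof.
rewrite /G mulmx_suml (bigD1 z) //= -mulmxA EmbEv eqxx mulmx1 big1 ?addr0 //.
by move=> y /negbTE zy; rewrite -mulmxA EmbEv zy /= -scalemx1 scale0r mulmx0.
Qed.

Lemma G_U : (G <= U)%MS.
Proof. by apply: subUI => y x; rewrite !GEv -H1 neM. Qed.


Fact S_key : unit. Proof. by []. Qed.
Definition S := locked_with S_key (row_base U).
Lemma SE : S = row_base U. Proof. exact: unlock. Qed.
Definition rW (m : M) : 'M[k]_(\rank U) := S *m F m *m pinvmx S.

Lemma S_U : (S <= U)%MS.
Proof. by rewrite SE (eq_row_base U). Qed.

Lemma U_S m (A : 'M[k]_(m, D)) : (A <= U)%MS -> (A <= S)%MS.
Proof. by rewrite SE (eq_row_base U). Qed.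

Lemma Sfree : row_free S.
Proof. rewrite SE; exact: row_base_free. Qed.

Lemma rWS m : rW m *m S = S *m F m.
Proof. by rewrite /rW mulmxKpV // U_S // U_inv // S_U. Qed.

Lemma rW_rep : is_rep mul one rW.
Proof.
split.
  by apply: (row_free_inj Sfree); rewrite /= rWS F1 mulmx1 mul1mx.
move=> a b; apply: (row_free_inj Sfree); rewrite /=.
by rewrite rWS FM -mulmxA rWS (mulmxA S) (mulmxA (rW a)) rWS.
Qed.

Lemma SU_sub m (A : 'M[k]_(m, \rank U)) : (A *m S <= U)%MS.
Proof. exact: submx_trans (submxMl _ _) S_U. Qed.

Lemma L1 m (A : 'M[k]_(m, D)) y : (A <= U)%MS -> A *m Ev (mul y e) = A *m Ev y.
Proof.
move=> HA; have := subUP HA y e; rewrite !he H2 mulmx1 => <-.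
by rewrite ?heR.
Qed.

Lemma L2 m (A : 'M[k]_(m, D)) x : (A <= U)%MS ->
  A *m Ev (ne x) = A *m Ev e *m rV (ne x).
Proof.
move=> HA; have := subUP HA e x; rewrite !massoc he => <-.
by rewrite ?massoc.
Qed.

Fact g_key : unit. Proof. by []. Qed.
Definition g := locked_with g_key (G *m pinvmx S).
Lemma gE : g = G *m pinvmx S. Proof. exact: unlock. Qed.

Lemma gS : g *m S = G.
Proof. by rewrite gE mulmxKpV // U_S // G_U. Qed.

Lemma C1 : rW e = S *m Ev e *m g.
Proof.
apply: (row_free_inj Sfree); rewrite /= rWS -mulmxA gS.
apply: sepEv => y; rewrite -(mulmxA S) FEv -(mulmxA (S *m Ev e)) GEv.
by rewrite -(L1 (mul e y) S_U) L2 // S_U.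
Qed.

Lemma gRe : g *m rW e = g.
Proof.
apply: (row_free_inj Sfree); rewrite /= -mulmxA rWS mulmxA gS.
apply: sepEv => y; rewrite -mulmxA FEv !GEv.
by rewrite !massoc he.
Qed.

Lemma rVg x : rV (ne x) *m g = g *m rW (ne x).
Proof.
apply: (row_free_inj Sfree); rewrite /= -(mulmxA (rV _)) gS -(mulmxA g) rWS (mulmxA g) gS.
apply: sepEv => y; rewrite -(mulmxA (rV _)) GEv -(mulmxA G) FEv GEv -H1.
by congr rV; rewrite !massoc ?he !heR.
Qed.

Definition EV (E : 'M[k]_(\rank U)) := g *m E *m S *m Ev e.

Lemma lemA (E : 'M[k]_(\rank U)) : (forall x, E *m rW x = rW x *m E) ->
  forall y, E *m S *m Ev y = rW y *m S *m Ev e *m EV E.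
Proof.
move=> HE y.
rewrite -(L1 y (SU_sub E)).
have -> : Ev (mul y e) = F (mul y e) *m Ev e by rewrite FEv heR.
rewrite mulmxA -(mulmxA E) -rWS mulmxA HE.
have [_ ->] := rW_rep.
rewrite -(mulmxA (rW y)) C1 /EV.
by rewrite !mulmxA.
Qed.

Lemma lemA0 (E : 'M[k]_(\rank U)) : (forall x, E *m rW x = rW x *m E) ->
  EV E = 0 -> E = 0.
Proof.
move=> HE H0; apply: (row_free_inj Sfree); rewrite /= mul0mx.
apply: sepEv => y; rewrite lemA // H0 mulmx0 mul0mx //.
Qed.

Lemma lemB_idem (E : 'M[k]_(\rank U)) : (forall x, E *m rW x = rW x *m E) ->
  E *m E = E -> EV E *m EV E = EV E.
Proof.
move=> HE HEE; rewrite /EV.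
have -> : g *m E *m S *m Ev e *m (g *m E *m S *m Ev e)
    = g *m E *m (S *m Ev e *m g) *m E *m S *m Ev e by rewrite !mulmxA.
by rewrite -C1 -(mulmxA g E) HE mulmxA gRe -(mulmxA g E E) HEE.
Qed.

Lemma lemB_comm (E : 'M[k]_(\rank U)) : (forall x, E *m rW x = rW x *m E) ->
  forall x, EV E *m rV (ne x) = rV (ne x) *m EV E.
Proof.
move=> HE x; rewrite /EV !mulmxA rVg -(mulmxA g (rW _)) -HE (mulmxA g E).
rewrite -(mulmxA (g *m E) (rW _)) rWS (mulmxA (g *m E) S).
rewrite -(mulmxA (g *m E *m S) (F _)) FEv heR.
by rewrite (L2 x (SU_sub (g *m E))).
Qed.

Lemma EV1 (E : 'M[k]_(\rank U)) : EV (1%:M - E) = 1%:M - EV E.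
Proof.
by rewrite /EV mulmxBr mulmx1 !mulmxBl gS GEv he he H2.
Qed.

Hypothesis VL : forall E : 'M[k]_d, E *m E = E ->
  (forall x, E *m rV (ne x) = rV (ne x) *m E) -> E = 0 \/ E = 1%:M.

Lemma rW_idem (E : 'M[k]_(\rank U)) : E *m E = E ->
  (forall x, E *m rW x = rW x *m E) -> E = 0 \/ E = 1%:M.
Proof.
move=> HEE HE.
have [H0|H1'] := VL (lemB_idem HE HEE) (lemB_comm HE).
  by left; apply: lemA0.
right.
have HE' : forall x, (1%:M - E) *m rW x = rW x *m (1%:M - E).
  by move=> x; rewrite mulmxBl mulmxBr mul1mx mulmx1 HE.
have := lemA0 HE'; rewrite EV1 H1' subrr => /(_ erefl) /eqP.
by rewrite subr_eq0 => /eqP <-.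
Qed.

Lemma rank_lb : (d <= \rank U)%N.
Proof.
apply: leq_trans (mxrankS G_U).
have := mxrankM_maxl G (Ev e); rewrite GEv he he H2 mxrank1 //.
Qed.

Lemma rank_ub : (\rank U <= #|M| * d)%N.
Proof. exact: rank_leq_col. Qed.

End Coind.


Section Kron.
Variables (k : fieldType) (n' : nat).
Local Notation n := n'.+1.

Definition Jm : 'M[k]_n := \matrix_(i, j) ((j : nat) == i.+1)%:R.
Definition eL : 'rV[k]_n := delta_mx 0 ord_max.

Lemma vJ_0 (v : 'rV[k]_n) (j : 'I_n) : (j : nat) = 0%N -> (v *m Jm) 0 j = 0.
Proof. by move=> Hj; rewrite mxE big1 // => i _; rewrite mxE Hj /= mulr0. Qed.

Lemma vJ_S (v : 'rV[k]_n) (i j : 'I_n) : (j : nat) = i.+1 -> (v *m Jm) 0 j = v 0 i.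
Proof.
move=> Hj; rewrite mxE (bigD1 i) //= mxE Hj eqxx mulr1 big1 ?addr0 //.
move=> l nli; rewrite mxE Hj eqSS.
have -> : ((i : nat) == l) = false by rewrite eq_sym; apply/negbTE.
by rewrite mulr0.
Qed.

Lemma base_vec (v : 'rV[k]_n) : (forall i : 'I_n, (i < n')%N -> v 0 i = 0) ->
  v = v 0 ord_max *: eL.
Proof.
move=> H; apply/matrixP => a b; rewrite (ord1 a) !mxE /=.
case: (b =P ord_max) => [->|nb]; first by rewrite mulr1.
rewrite mulr0 H //; have := ltn_ord b; rewrite ltnS leq_eqVlt => /orP [|//].
by move=> hb; case: nb; apply/val_inj; apply/eqP.
Qed.

Lemma base_case (gm : 'M[k]_n) (v : 'rV[k]_n) : v *m gm = v -> v != 0 ->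
  (forall i : 'I_n, (i < n')%N -> v 0 i = 0) -> eL *m gm = eL.
Proof.
move=> Hv nz H; have Ev := base_vec H.
have c0 : v 0 ord_max != 0.
  by apply: contraNneq nz => c0; rewrite Ev c0 scale0r.
have -> : eL = (v 0 ord_max)^-1 *: v by rewrite {2}Ev scalerA mulVf // scale1r.
by rewrite -scalemxAl Hv.
Qed.

Lemma claim (gm : 'M[k]_n) : gm *m Jm = Jm *m gm -> forall s (v : 'rV[k]_n),
  v *m gm = v -> v != 0 -> (forall i : 'I_n, (i + s < n')%N -> v 0 i = 0) ->
  eL *m gm = eL.
Proof.
move=> Hc; elim=> [|s IH] v Hv nz H.
  by apply: (base_case Hv nz) => i hi; apply: H; rewrite addn0.
have [vJ0|vJn0] := eqVneq (v *m Jm) 0.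
  apply: (base_case Hv nz) => i hi.
  have hi' : (i.+1 < n)%N by [].
  by rewrite -(@vJ_S v i (Ordinal hi')) // vJ0 mxE.
apply: (IH (v *m Jm)) => //.
  by rewrite -mulmxA -Hc mulmxA Hv.
move=> i hi; case Hi: (i : nat) => [|i'].
  exact: vJ_0.
have hi' : (i' < n)%N by rewrite -ltnS -Hi ltnS ltnW.
rewrite (vJ_S v (i := Ordinal hi')) //; apply: H => /=.
by rewrite addnS -addSn -Hi.
Qed.

Lemma nz_idem (gm : 'M[k]_n) : gm *m Jm = Jm *m gm -> gm *m gm = gm ->
  gm != 0 -> eL *m gm = eL.
Proof.
move=> Hc Hi nz.
have [i Hr] : exists i, row i gm != 0.
  apply/existsP; rewrite -negb_forall; apply: contra nz => /forallP H.
  by apply/eqP/row_matrixP => i; rewrite row0; apply/eqP.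
apply: (claim Hc (s := n) (v := row i gm)) => //.
  by rewrite -row_mul Hi.
by move=> j hj; exfalso; move: hj; rewrite ltnNge (leq_trans (leqnSn _) (leq_addl _ _)).
Qed.

Lemma LJ (f : 'M[k]_n) : f *m f = f -> f *m Jm = Jm *m f -> f = 0 \/ f = 1%:M.
Proof.
move=> Hi Hc.
have [->|nf] := eqVneq f 0; first by left.
have [h1|nf1] := eqVneq (1%:M - f) 0.
  by right; apply/eqP; rewrite eq_sym -subr_eq0 h1.
exfalso.
have e1 := nz_idem Hc Hi nf.
have e2 : eL *m (1%:M - f) = eL.
  apply: nz_idem nf1.
    by rewrite mulmxBl mulmxBr mul1mx mulmx1 Hc.
  by rewrite mulmxBl !mulmxBr !mul1mx mulmx1 Hi subrr subr0.
move: e2; rewrite mulmxBr mulmx1 e1 subrr => /matrixP/(_ 0 ord_max).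
by rewrite !mxE !eqxx /= => /eqP; rewrite eq_sym oner_eq0.
Qed.

Definition Ap : 'M[k]_(n + n) := block_mx 0 1%:M 0 0.
Definition Bp : 'M[k]_(n + n) := block_mx 0 Jm 0 0.

Lemma kron (E : 'M[k]_(n + n)) : E *m E = E -> E *m Ap = Ap *m E ->
  E *m Bp = Bp *m E -> E = 0 \/ E = 1%:M.
Proof.
rewrite /Ap /Bp -[E]submxK.
move: (ulsubmx E) (ursubmx E) (dlsubmx E) (drsubmx E) => a b c d H1 H2 H3.
move: H1 H2 H3; rewrite !mulmx_block !mulmx0 !mul0mx !mulmx1 !mul1mx !addr0 !add0r.
case/eq_block_mx => h11 h12 _ _ /eq_block_mx [c0 ad _ _] /eq_block_mx [_ hJ _ _].
subst c d.
move: h11 h12; rewrite ?mulmx0 ?mul0mx ?addr0 ?add0r => h11 h12.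
have [ha|ha] := LJ h11 hJ; rewrite ha in h12 *.
  by left; move: h12; rewrite mulmx0 mul0mx addr0 => <-; rewrite block_mx0.
right; move: h12; rewrite mulmx1 mul1mx => hb.
have b0 : b = 0 by apply: (addrI b); rewrite addr0.
by rewrite b0 -scalar_mx_block.
Qed.
End Kron.


Definition pdec (P : Prop) : {P} + {~ P} := excluded_middle_informative P.

Section Mon.
Variables (M : finType) (mul : M -> M -> M) (e : M).
Hypothesis massoc : forall a b c, mul a (mul b c) = mul (mul a b) c.
Hypothesis he : mul e e = e.
Local Notation ne x := (mul (mul e x) e).
Local Notation ic := (in_corner mul e).
Local Notation cu := (corner_unit mul e).
Local Notation asc := (corner_associates mul e).

Lemma icE x : ic x <-> ne x = x.
Proof.
split; last by move=> h; exists x.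
case=> m ->; by rewrite !massoc he -massoc he.
Qed.

Lemma ic_l x : ic x -> mul e x = x.
Proof. by case=> m ->; rewrite !massoc he. Qed.

Lemma ic_r x : ic x -> mul x e = x.
Proof. by case=> m ->; rewrite -massoc he. Qed.

Lemma ic_ne x : ic (ne x).
Proof. by exists x. Qed.

Lemma ic_mul a b : ic a -> ic b -> ic (mul a b).
Proof.
move=> ha hb; apply/icE.
by rewrite (massoc e a b) (ic_l ha) -massoc (ic_r hb).
Qed.

Lemma cu_ic x : cu x -> ic x.
Proof. by case. Qed.

Lemma cu_e : cu e.
Proof.
have iee : ic e by apply/icE; rewrite !he.
by split=> //; exists e; rewrite he.
Qed.

Lemma cu_mul a b : cu a -> cu b -> cu (mul a b).
Proof.
move=> [ia [a' [ia' [h1 h2]]]] [ib [b' [ib' [h3 h4]]]].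
split; first exact: ic_mul.
exists (mul b' a'); split; first exact: ic_mul.
split.
  by rewrite -massoc (massoc b) h3 ic_l.
by rewrite -massoc (massoc a') h2 ic_l.
Qed.

Lemma cu_inv a : cu a -> exists a', cu a' /\ mul a' a = e /\ mul a a' = e.
Proof.
move=> [ia [a' [ia' [h1 h2]]]]; exists a'; split=> //.
by split=> //; exists a.
Qed.

Lemma right_inv_unit a z : ic a -> ic z -> mul a z = e -> cu a.
Proof.
move=> ia iz h.
pose Ns := [set t | ne t == t].
have inN t : (t \in Ns) = (ne t == t) by rewrite inE.
have sub : [set mul z t | t in Ns] \subset Ns.
  apply/subsetP => u /imsetP [t]; rewrite inN => /eqP ht ->.
  by rewrite inN; apply/eqP/icE/ic_mul => //; apply/icE.
have inj : {in Ns &, injective (mul z)}.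
  move=> t t'; rewrite !inN => /eqP/icE ht /eqP/icE ht' htt.
  by rewrite -(ic_l ht) -(ic_l ht') -h -!massoc htt.
have eqs : [set mul z t | t in Ns] = Ns.
  apply/eqP; rewrite eqEcard sub /= card_in_imset //.
have : e \in [set mul z t | t in Ns].
  by rewrite eqs inN !he.
case/imsetP => w; rewrite inN => /eqP/icE iw hw.
have aw : a = w by rewrite -(ic_r ia) hw massoc h ic_l.
split=> //; exists z; split=> //; split=> //.
by rewrite aw -hw.
Qed.

Lemma asc_unitL a b t : cu a -> ic b -> (asc (mul a b) t <-> asc b t).
Proof.
move=> ua ib; have [a' [ua' [h1 h2]]] := cu_inv ua.
split.
  case=> u [v [uu [uv hb]]]; exists (mul a' u), v; split; first exact: cu_mul.
  split=> //.
  by rewrite -(ic_l ib) -h1 -massoc hb !massoc.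
case=> u [v [uu [uv hb]]]; exists (mul a u), v; split; first exact: cu_mul.
by split=> //; rewrite hb !massoc.
Qed.

Lemma asc_unitR a b t : ic a -> cu b -> (asc (mul a b) t <-> asc a t).
Proof.
move=> ia ub; have [b' [ub' [h1 h2]]] := cu_inv ub.
split.
  case=> u [v [uu [uv hb]]]; exists u, (mul v b'); split=> //.
  split; first exact: cu_mul.
  by rewrite -(ic_r ia) -h2 massoc hb !massoc.
case=> u [v [uu [uv hb]]]; exists u, (mul v b); split=> //.
by split; [exact: cu_mul | rewrite hb !massoc].
Qed.

Lemma cu_unitL a b : cu a -> ic b -> (cu (mul a b) <-> cu b).
Proof.
move=> ua ib; have [a' [ua' [h1 h2]]] := cu_inv ua.
split; last exact: cu_mul.
move=> uab; have := cu_mul ua' uab.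
by rewrite massoc h1 ic_l.
Qed.

Lemma cu_unitR a b : ic a -> cu b -> (cu (mul a b) <-> cu a).
Proof.
move=> ia ub; have [b' [ub' [h1 h2]]] := cu_inv ub.
split; last by move=> ua; exact: cu_mul.
move=> uab; have := cu_mul uab ub'.
by rewrite -massoc h2 ic_r.
Qed.

Lemma nonunit_prod a b : ic a -> ic b -> ~ cu a -> ~ cu b -> ~ cu (mul a b).
Proof.
move=> ia ib na nb [iab [w [iw [h1 h2]]]].
apply: na; apply: (right_inv_unit (z := mul b w)) => //.
  exact: ic_mul.
by rewrite massoc.
Qed.

Lemma nonunit_asc a b t : ic a -> ic b -> ~ cu a -> ~ cu b ->
  corner_irreducible mul e t -> ~ asc (mul a b) t.
Proof.
move=> ia ib na nb [it [nt irr]] [u [v [uu [uv h]]]].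
have [u' [uu' [hu1 hu2]]] := cu_inv uu.
have [v' [uv' [hv1 hv2]]] := cu_inv uv.
have ht : t = mul (mul u' a) (mul b v').
  have -> : mul (mul u' a) (mul b v') = mul (mul u' (mul a b)) v' by rewrite !massoc.
  by rewrite h !massoc hu1 (ic_l it) -massoc hv2 (ic_r it).
have [] := irr _ _ (ic_mul (cu_ic uu') ia) (ic_mul ib (cu_ic uv')) ht.
  move=> hu; apply: na; have := cu_mul uu hu.
  by rewrite massoc hu2 ic_l.
move=> hv; apply: nb; have := cu_mul hv uv.
by rewrite -massoc hv1 ic_r.
Qed.


Variables (k : fieldType) (n' : nat) (p q : M).
Hypothesis irp : corner_irreducible mul e p.
Hypothesis irq : corner_irreducible mul e q.
Hypothesis npq : ~ corner_associates mul e p q.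
Local Notation n := n'.+1.

Definition nilpart (x : M) : 'M[k]_n :=
  if pdec (asc x p) then 1%:M else if pdec (asc x q) then Jm k n' else 0.
Definition rV (x : M) : 'M[k]_(n + n) :=
  if pdec (cu x) then 1%:M else block_mx 0 (nilpart x) 0 0.

Lemma rV_ext x y : (cu x <-> cu y) -> (asc x p <-> asc y p) ->
  (asc x q <-> asc y q) -> rV x = rV y.
Proof.
move=> h1 h2 h3; rewrite /rV /nilpart.
case: (pdec (cu x)) => hx; case: (pdec (cu y)) => hy /=; try tauto; try done.
case: (pdec (asc x p)) => hxp; case: (pdec (asc y p)) => hyp /=; try tauto; try done.
by case: (pdec (asc x q)) => hxq; case: (pdec (asc y q)) => hyq /=; try tauto.
Qed.

Lemma rV_unit x : cu x -> rV x = 1%:M.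
Proof. by rewrite /rV; case: pdec. Qed.

Lemma rV_zero x : ~ cu x -> ~ asc x p -> ~ asc x q -> rV x = 0.
Proof.
move=> h1 h2 h3; rewrite /rV /nilpart.
case: pdec => // ?; case: pdec => // ?; case: pdec => // ?.
by rewrite block_mx0.
Qed.

Lemma rV_nonunit x : ~ cu x -> exists X, rV x = block_mx 0 X 0 0.
Proof. by move=> h; rewrite /rV; case: pdec => // ?; eexists. Qed.

Lemma rV_mul a b : ic a -> ic b -> rV (mul a b) = rV a *m rV b.
Proof.
move=> ia ib.
case: (pdec (cu a)) => ua.
  rewrite (rV_unit ua) mul1mx; apply: rV_ext.
  - exact: cu_unitL.
  - exact: asc_unitL.
  - exact: asc_unitL.
case: (pdec (cu b)) => ub.
  rewrite (rV_unit ub) mulmx1; apply: rV_ext.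
  - exact: cu_unitR.
  - exact: asc_unitR.
  - exact: asc_unitR.
have [X ->] := rV_nonunit ua; have [Y ->] := rV_nonunit ub.
rewrite mulmx_block !mulmx0 !mul0mx !addr0 block_mx0.
apply: rV_zero.
- exact: nonunit_prod.
- exact: nonunit_asc.
- exact: nonunit_asc.
Qed.

Lemma rV_H1 x y : rV (mul (ne x) (ne y)) = rV (ne x) *m rV (ne y).
Proof. by apply: rV_mul; apply: ic_ne. Qed.

Lemma rV_H2 : rV e = 1%:M.
Proof. by apply: rV_unit; apply: cu_e. Qed.

Lemma asc_refl t : ic t -> asc t t.
Proof.
move=> it; exists e, e; split; first exact: cu_e.
split; first exact: cu_e.
by rewrite ic_l // ic_r.
Qed.

Lemma rV_p : rV p = Ap k n'.
Proof.
case: irp => ip [np _].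
rewrite /rV /nilpart; case: pdec => // ?; case: pdec => // h.
by case: h; apply: asc_refl.
Qed.

Lemma rV_q : rV q = Bp k n'.
Proof.
case: irq => iq [nq _].
rewrite /rV /nilpart; case: pdec => // ?; case: pdec => [hqp|?].
  case: npq; case: hqp => u [v [uu [uv h]]].
  have [u' [uu' [hu1 hu2]]] := cu_inv uu.
  have [v' [uv' [hv1 hv2]]] := cu_inv uv.
  exists u', v'; split=> //; split=> //.
  case: irp => ip _.
  by rewrite h !massoc hu1 (ic_l ip) -massoc hv2 (ic_r ip).
case: pdec => // h.
by case: h; apply: asc_refl.
Qed.

Lemma rV_VL (E : 'M[k]_(n + n)) : E *m E = E ->
  (forall x, E *m rV (ne x) = rV (ne x) *m E) -> E = 0 \/ E = 1%:M.
Proof.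
move=> HE Hc; apply: kron => //.
  have := Hc p; have [ip _] := irp.
  by move/icE: ip => ->; rewrite rV_p.
have := Hc q; have [iq _] := irq.
by move/icE: iq => ->; rewrite rV_q.
Qed.
End Mon.


Lemma iso_dim (k : fieldType) (M : Type) a b (r1 : M -> 'M[k]_a) (r2 : M -> 'M[k]_b) :
  rep_iso r1 r2 -> a = b.
Proof.
case=> P [Q [PQ [QP _]]]; apply/eqP; rewrite eqn_leq; apply/andP; split.
  have := mxrankM_maxl P Q; rewrite PQ mxrank1 => h.
  exact: leq_trans h (rank_leq_col P).
have := mxrankM_maxl Q P; rewrite QP mxrank1 => h.
exact: leq_trans h (rank_leq_col Q).
Qed.

Lemma indec_of (k : fieldType) (M : Type) (mul : M -> M -> M) (one : M) r
  (rho : M -> 'M[k]_r) : (0 < r)%N ->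
  (forall E, E *m E = E -> (forall x, E *m rho x = rho x *m E) -> E = 0 \/ E = 1%:M) ->
  rep_indecomposable mul one rho.
Proof.
move=> hr H; split=> // a b r1 r2 _ _ ha hb [P [Q [PQ [QP Hx]]]].
pose Dm : 'M[k]_(a + b) := block_mx 1%:M 0 0 0.
have DD : Dm *m Dm = Dm by rewrite mulmx_block !mulmx0 !mul0mx !mulmx1 !addr0.
have Dc x : Dm *m rep_dsum r1 r2 x = rep_dsum r1 r2 x *m Dm.
  by rewrite /rep_dsum !mulmx_block !mulmx0 !mul0mx !mulmx1 !mul1mx ?addr0 ?add0r.
have Qr x : Q *m rho x = rep_dsum r1 r2 x *m Q.
  by rewrite -[Q *m rho x]mulmx1 -PQ mulmxA -(mulmxA Q (rho x) P) Hx mulmxA QP mul1mx.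
pose E := P *m Dm *m Q.
have EE : E *m E = E.
  by rewrite /E !mulmxA -(mulmxA (P *m Dm) Q P) QP mulmx1 -(mulmxA P Dm Dm) DD.
have Ec x : E *m rho x = rho x *m E.
  rewrite /E -(mulmxA (P *m Dm) Q) Qr mulmxA -(mulmxA P Dm) Dc mulmxA -Hx.
  by rewrite !mulmxA.
have QEP : Q *m E *m P = Dm.
  by rewrite /E !mulmxA QP mul1mx -mulmxA QP mulmx1.
case: (H E EE Ec) => hE; move: QEP; rewrite hE.
  rewrite mulmx0 mul0mx => /matrixP/(_ (lshift b (Ordinal ha)) (lshift b (Ordinal ha))).
  by rewrite block_mxEul !mxE eqxx /= => /eqP; rewrite eq_sym oner_eq0.
rewrite mulmx1 QP => /matrixP/(_ (rshift a (Ordinal hb)) (rshift a (Ordinal hb))).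
by rewrite block_mxEdr !mxE eqxx /= => /eqP; rewrite oner_eq0.
Qed.


Lemma growth c i j : (i < j)%N ->
  (c * ((c.+1 ^ i.+1).+1 + (c.+1 ^ i.+1).+1) < (c.+1 ^ j.+1).+1 + (c.+1 ^ j.+1).+1)%N.
Proof.
move=> hij.
have hX : (c.+1 <= c.+1 ^ i.+1)%N.
  by rewrite -{1}(expn1 c.+1) leq_pexp2l.
have hY : (c.+1 * c.+1 ^ i.+1 <= c.+1 ^ j.+1)%N.
  by rewrite -expnS leq_pexp2l.
move: hX hY; set X := (c.+1 ^ i.+1)%N; set Y := (c.+1 ^ j.+1)%N => hX hY.
nia.
Qed.

Theorem corollary9 (M : finType) (mul : M -> M -> M) (one : M)
  (k : fieldType) :
  is_monoid mul one ->
  (exists e : M, idempotent_el mul e /\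
     exists p q : M, corner_irreducible mul e p /\ corner_irreducible mul e q /\
       ~ corner_associates mul e p q) ->
  infinite_rep_type k mul one.
Proof.
move=> [massoc [mul1m mulm1]] [e [he [p [q [irp [irq npq]]]]]] N.
pose c := #|M|.
pose m (i : nat) := (c.+1 ^ i.+1)%N.
pose rVi (i : nat) := rV mul e k (m i) p q.
have bounds i : ((m i).+1 + (m i).+1 <= \rank (U mul e (rVi i)) <= c * ((m i).+1 + (m i).+1))%N.
  apply/andP; split.
    exact: (rank_lb massoc he (rV_H1 massoc he k (m i) irp irq) (rV_H2 massoc he k (m i) p q)).
  exact: rank_ub.
exists (fun i : 'I_N => \rank (U mul e (rVi i))), (fun i => rW mul e (rVi i)).
split.
  move=> i; split; first exact: rW_rep.
  apply: indec_of.
    by apply: leq_trans (proj1 (andP (bounds i))).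
  move=> E; apply: (rW_idem massoc mul1m he).
  - exact: (rV_H1 massoc he k (m i) irp irq).
  - exact: (rV_H2 massoc he k (m i) p q).
  - exact: (rV_VL massoc he irp irq npq).
move=> i j nij /iso_dim.
have key a b : (a < b)%N -> \rank (U mul e (rVi a)) <> \rank (U mul e (rVi b)).
  move=> hab heq; have := growth c hab.
  have /andP [_ h1] := bounds a; have /andP [h2 _] := bounds b.
  rewrite -/(m a) -/(m b); lia.
case: (ltngtP i j) => hij.
- exact: key.
- by move=> h; apply: (key _ _ hij); rewrite h.
- by case/eqP: nij; apply: val_inj.
Qed.
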